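(* For every integer $n \ge 1$, let $f(n)$ be the number of partitions $\lambda \vdash n$ that have a fixed hook. Then $$f(n) = \sum_{\lambda \vdash n} \#\{\, i \ge 1 : \text{the part } i \text{ occurs in } \lambda \text{ with multiplicity exactly } i \,\}.$$
   Context: A partition $\lambda=(\lambda_1,\dots,\lambda_t)$ of $n$ (written $\lambda\vdash n$) is a sequence of integers $\lambda_1\ge\lambda_2\ge\cdots\ge\lambda_t>0$ with $\sum_i\lambda_i=n$; $t$ is its number of parts. The first-column hook lengths of $\lambda$ are $h_{i,1}(\lambda)=\lambda_i+(t-i)$ for $1\le i\le t$ (the hook length of the box $(i,1)$ of the Young diagram). For $h\in\mathbb{Z}$, $\lambda$ has an $h$-fixed hook if there is some $i\ge1$ with $h_{i,1}(\lambda)=i+h$; a $0$-fixed hook is called a fixed hook, i.e. $\lambda$ has a fixed hook if $h_{i,1}(\lambda)=i$ for some $i$. *)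

(* Defs.v *)
From mathcomp Require Import all_boot.
Set Implicit Arguments. Unset Strict Implicit. Unset Printing Implicit Defensive.

Definition is_partition (n : nat) (l : seq nat) : bool :=
  [&& sorted geq l, all (fun x => 0 < x) l & sumn l == n].

(* first-column hook length h_{i,1} = lambda_i + (t - i), for 1 <= i <= t *)
Definition hook1 (l : seq nat) (i : nat) : nat :=
  nth 0 l i.-1 + (size l - i).

Definition has_fixed_hook (l : seq nat) : bool :=
  has (fun i => hook1 l i == i) (iota 1 (size l)).

(* number of i >= 1 such that part i occurs in l with multiplicity exactly i.
   (Such i satisfy i <= i*i <= sumn l, so ranging over 1..sumn l suffices.) *)
Definition mult_eq_count (l : seq nat) : nat :=
  count (fun i => count_mem i l == i) (iota 1 (sumn l)).

(* Main.v *)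
Require Import Defs.
From mathcomp Require Import all_boot zify.
Set Implicit Arguments. Unset Strict Implicit. Unset Printing Implicit Defensive.

Definition cge (c : nat) (L : seq nat) := count (fun x => c <= x) L.

Fixpoint psi (c : nat) (Br A : seq nat) {struct Br} : seq nat * seq nat :=
  match c with
  | 0 => ([::], Br)
  | c'.+1 =>
    match Br with
    | [::] => ([::], [::])
    | b :: Br' =>
      if head 0 A == c then
        let p := psi c Br' (behead A) in (c :: p.1, b :: p.2)
      else
        let p := psi c' Br' A in (nseq b c ++ drop b p.1, p.2)
    end
  end.

Definition validB c Br A :=
  [&& sorted leq Br, sorted geq A, all (fun a => a <= c) A & size Br == c + size A].

Lemma sorted_cons_all (r : rel nat) x s : transitive r ->
  sorted r (x :: s) = all (r x) s && sorted r s.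
Proof.
move=> tr; apply/idP/idP.
  by move=> H; rewrite (order_path_min tr H) (path_sorted H).
by case/andP=> H1 H2; rewrite /= path_min_sorted.
Qed.

Lemma geq_trans : transitive geq.
Proof. by move=> a b c /= H1 H2; apply: leq_trans H2 H1. Qed.

Lemma sorted_geq_nseq b c s : sorted geq s -> all (fun y => y <= c) s ->
  sorted geq (nseq b c ++ s).
Proof.
move=> Hs Ha; elim: b => [|b IH] //=.
rewrite path_min_sorted // all_cat.
apply/andP; split; first by apply/allP=> y /nseqP [-> _] /=.
exact: Ha.
Qed.

Lemma cge_small k L : all (fun y => y < k) L -> cge k L = 0.
Proof.
move=> H; apply/eqP; rewrite -leqn0 leqNgt -has_count; apply/hasP=> [[y Hy Hk]].
by move: (allP H y Hy); rewrite ltnNge Hk.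
Qed.

Lemma take_top k L b : sorted geq L -> all (fun x => x <= k) L -> b <= cge k L ->
  take b L = nseq b k.
Proof.
elim: L b => [|y L IH] b /=; first by rewrite /cge /=; case: b.
move=> Hs /andP [Hy Ha]; rewrite /cge /=.
case: b => [|b] //= Hb.
have Hyk : y = k.
  apply/eqP; rewrite eqn_leq Hy /=; case: (leqP k y) Hb => // Hlt Hb.
  have HL : all (fun z => z < k) L.
    apply/allP => z Hz; apply: leq_ltn_trans Hlt.
    move: (order_path_min geq_trans Hs) => /allP /(_ z Hz) //.
  by move: Hb; rewrite add0n; change (count [eta leq k] L) with (cge k L); rewrite (cge_small HL).
subst y; rewrite leqnn add1n ltnS in Hb.
by rewrite IH // (path_sorted Hs).
Qed.

Lemma path_leq_all z s : path leq z s -> all (leq z) s.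
Proof. exact: (order_path_min leq_trans). Qed.

Lemma all_le_of c L : all (fun x => 0 < x <= c) L -> all (geq c) L.
Proof. by move=> H; apply: sub_all H => x /andP []. Qed.

Lemma all_drop_pred (p : pred nat) n L : all p L -> all p (drop n L).
Proof. by move=> H; apply/allP=> x /mem_drop /(allP H). Qed.

Lemma nil_of_all0 L : all (fun x => 0 < x <= 0) L -> L = [::].
Proof. by case: L => //= x L; rewrite leqn0; case: x. Qed.

Lemma step_sum b c L : sorted geq L -> all (fun x => 0 < x <= c) L ->
  (0 < c -> b <= cge c L) -> sumn (nseq b c.+1 ++ drop b L) = b + sumn L.
Proof.
case: c => [|c] SL AL Hb.
  by rewrite (nil_of_all0 AL) /= cats0 sumn_nseq; lia.
have Ht := take_top SL (all_le_of AL) (Hb (ltn0Sn _)).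
rewrite -{2}(cat_take_drop b L) Ht !sumn_cat !sumn_nseq; lia.
Qed.

Lemma step_cge b c L : all (fun x => 0 < x <= c) L ->
  cge c.+1 (nseq b c.+1 ++ drop b L) = b.
Proof.
move=> AL; have -> : forall s1 s2, cge c.+1 (s1 ++ s2) = cge c.+1 s1 + cge c.+1 s2.
  by move=> s1 s2; rewrite /cge count_cat.
rewrite [cge _ (drop _ _)]cge_small.
  rewrite addn0; elim: b => //= b; rewrite /cge /= leqnn => ->.
  by [].
by apply: all_drop_pred; apply: sub_all AL => x /andP [].
Qed.

Lemma all_lt_head c A : sorted geq A -> all (fun a => a <= c.+1) A ->
  (head 0 A == c.+1) = false -> all (fun a => a <= c) A.
Proof.
case: A => //= a A SA /andP [Ha AA] /negbT Hne.
have Hac : a <= c by rewrite -ltnS ltn_neqAle Hne Ha.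
rewrite Hac /=; apply/allP=> x Hx.
by apply: leq_trans Hac; move: (allP (order_path_min geq_trans SA) x Hx).
Qed.

Lemma psi_ok c Br A L D : validB c Br A -> psi c Br A = (L, D) ->
  [/\ sorted geq L, all (fun x => 0 < x <= c) L, sorted leq D, size D = size A &
      sumn L + sumn D = sumn Br + sumn A /\
      forall z, path leq z Br -> all (leq z) D && ((0 < c) ==> (z <= cge c L))].
Proof.
elim: Br c A L D => [|b Br IH] [|c] A L D /and4P [HB HA Hc /eqP Hs] /=.
- case=> <- <-; case: A Hs HA Hc => //= _ _ _.
- by rewrite addSn in Hs.
- case=> <- <-; split => //.
  split; last first.
    by move=> z Hz; have := path_leq_all (Hz : path leq z (b::Br)); rewrite /= andbT.
    have -> : sumn A = 0.
      by apply/eqP/natnseq0P; apply/all_pred1P; apply/allP=> a Ha;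
        move: (allP Hc a Ha); rewrite leqn0.
    by rewrite add0n addn0.
- case: ifP => Hh.
  + case: A HA Hc Hs Hh => [|a A'] //= HA Hc Hs /eqP Ha; subst a.
    case E: (psi _ Br _) => [L' D'] /= [<- <-].
    have V : validB c.+1 Br A'.
      rewrite /validB (path_sorted HB) (path_sorted HA).
      by case/andP: Hc => _ ->; apply/eqP; move: Hs => /=; lia.
    case: (IH _ _ _ _ V E) => SL AL SD SzD [Sum Inv].
    have Inv' := Inv b HB; case/andP: Inv' => HD' HL'.
    split => //.
    * by rewrite /= path_min_sorted // (all_le_of AL).
    * by rewrite /= leqnn AL.
    * by rewrite /= path_min_sorted.
    * by rewrite /= SzD.
    split; first by rewrite /=; lia.
    move=> z /andP [Hzb _]; rewrite /= Hzb /=.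
    rewrite (sub_all _ HD') /=; last by move=> x; apply: leq_trans.
    rewrite /cge /= leqnn add1n; change (count [eta leq c.+1] L') with (cge c.+1 L').
    by apply: leq_trans Hzb (leq_trans HL' (leqnSn _)).
  + case E: (psi _ Br _) => [L' D'] /= [<- <-].
    have V : validB c Br A.
      rewrite /validB (path_sorted HB) HA (all_lt_head HA Hc Hh).
      by apply/eqP; move: Hs => /=; lia.
    case: (IH _ _ _ _ V E) => SL AL SD SzD [Sum Inv].
    have Inv' := Inv b HB; case/andP: Inv' => HD' HL'.
    split => //.
    * apply: sorted_geq_nseq; first exact: drop_sorted.
      by apply: all_drop_pred; apply: sub_all AL => x /andP [_ /leqW].
    * rewrite all_cat; apply/andP; split; first by apply/allP=> x /nseqP [-> _] /=.
      by apply: all_drop_pred; apply: sub_all AL => x /andP [-> /leqW].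
    split.
      rewrite (step_sum SL AL); last by move=> Hc0; move: HL'; rewrite Hc0.
      by rewrite /=; lia.
    move=> z /andP [Hzb _]; rewrite (step_cge _ AL) Hzb /= andbT.
    by rewrite (sub_all _ HD') //; move=> x; apply: leq_trans.
Qed.

Lemma validD c b Br A : validB c.+1 (b :: Br) A -> head 0 A == c.+1 ->
  exists2 A', A = c.+1 :: A' & validB c.+1 Br A'.
Proof.
case/and4P=> HB HA Hc /eqP Hs; case: A HA Hc Hs => [|a A'] //= HA Hc Hs /eqP Ha.
subst a; exists A' => //.
rewrite /validB (path_sorted HB) (path_sorted HA).
by case/andP: Hc => _ ->; apply/eqP; move: Hs; lia.
Qed.

Lemma validC c b Br A : validB c.+1 (b :: Br) A -> (head 0 A == c.+1) = false ->
  validB c Br A.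
Proof.
case/and4P=> HB HA Hc /eqP Hs Hh.
rewrite /validB (path_sorted HB) HA (all_lt_head HA Hc Hh).
by apply/eqP; move: Hs => /=; lia.
Qed.

Lemma psiD c b Br A' : psi c.+1 (b :: Br) (c.+1 :: A') =
  (c.+1 :: (psi c.+1 Br A').1, b :: (psi c.+1 Br A').2).
Proof. by rewrite /= eqxx. Qed.

Lemma psiC c b Br A : (head 0 A == c.+1) = false -> psi c.+1 (b :: Br) A =
  (nseq b c.+1 ++ drop b (psi c Br A).1, (psi c Br A).2).
Proof. by move=> H; rewrite /= H. Qed.

Lemma nseq0_of A : all (fun a => a <= 0) A -> A = nseq (size A) 0.
Proof. by elim: A => //= a A IH /andP [Ha /IH {1}->]; rewrite leqn0 in Ha; rewrite (eqP Ha). Qed.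

Lemma cge_cat k s1 s2 : cge k (s1 ++ s2) = cge k s1 + cge k s2.
Proof. by rewrite /cge count_cat. Qed.

Lemma vpath c b Br A : validB c (b :: Br) A -> path leq b Br.
Proof. by case/and4P. Qed.

Lemma mixed_false c b Br A b2 Br2 A2 :
  validB c.+1 (b :: Br) A -> head 0 A == c.+1 ->
  validB c.+1 (b2 :: Br2) A2 -> (head 0 A2 == c.+1) = false ->
  psi c.+1 (b :: Br) A = psi c.+1 (b2 :: Br2) A2 -> False.
Proof.
move=> V1 Hh1 V2 Hh; have [A' EA V1'] := validD V1 Hh1; subst A.
have V2' := validC V2 Hh.
rewrite psiD psiC //.
case E1: (psi c.+1 Br A') => [L1 D1]; case E2: (psi c Br2 A2) => [L2 D2] /= [EL ED].
case: (psi_ok V1' E1) => _ _ _ _ [_ Inv1]; case/andP: (Inv1 b (vpath V1)) => _ /= H1.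
case: (psi_ok V2' E2) => _ AL2 _ _ [_ Inv2].
case/andP: (Inv2 b2 (vpath V2)) => H2 _.
have := congr1 (cge c.+1) EL; rewrite (step_cge _ AL2) /cge /= leqnn add1n => Hb2.
rewrite -ED /= in H2; case/andP: H2 => H2 _.
move: H1 Hb2 H2; rewrite /cge; lia.
Qed.

Lemma psi0 Br A : psi 0 Br A = ([::], Br).
Proof. by case: Br. Qed.

Lemma L_eq_aux c b L1 L2 : sorted geq L1 -> sorted geq L2 ->
  all (fun x => 0 < x <= c) L1 -> all (fun x => 0 < x <= c) L2 ->
  ((0 < c) ==> (b <= cge c L1)) -> ((0 < c) ==> (b <= cge c L2)) ->
  drop b L1 = drop b L2 -> L1 = L2.
Proof.
case: c => [|c] SL1 SL2 AL1 AL2 HL1 HL2 ED2.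
  by rewrite (nil_of_all0 AL1) (nil_of_all0 AL2).
rewrite -(cat_take_drop b L1) -(cat_take_drop b L2) ED2.
by rewrite (take_top SL1 (all_le_of AL1) HL1) (take_top SL2 (all_le_of AL2) HL2).
Qed.

Lemma psi_inj c Br A Br2 A2 : validB c Br A -> validB c Br2 A2 ->
  psi c Br A = psi c Br2 A2 -> Br = Br2 /\ A = A2.
Proof.
elim: Br c A Br2 A2 => [|b Br IH] c A Br2 A2 V1 V2.
- case/and4P: V1 => _ _ _ /eqP Hs.
  case: c Hs V2 => [|c] Hs V2; last by [].
  case: A Hs => // _.
  case/and4P: V2 => _ _ _ /eqP; rewrite add0n !psi0 => Hs2 /= -[Eb].
  by rewrite -Eb in Hs2; case: A2 Hs2 => //= _; split.
- case: c V1 V2 => [|c] V1 V2.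
    case/and4P: V1 => _ _ H1 /eqP Hs1; case/and4P: V2 => _ _ H2 /eqP Hs2.
    rewrite !psi0 => -[EB]; rewrite -EB in Hs2 *; split => //.
    by rewrite (nseq0_of H1) (nseq0_of H2); congr nseq; lia.
  case: Br2 V2 => [|b2 Br2] V2.
    by case/and4P: V2 => _ _ _ /eqP; rewrite addSn.
  case H1: (head 0 A == c.+1); case H2: (head 0 A2 == c.+1).
  + have [A' EA V1'] := validD V1 H1; have [A2' EA2 V2'] := validD V2 H2.
    subst A A2; rewrite !psiD => -[E1 E2 E3].
    have [-> ->] : Br = Br2 /\ A' = A2'.
      by apply: (IH _ _ _ _ V1' V2'); rewrite [psi _ Br _]surjective_pairing E1 E3 -surjective_pairing.
    by rewrite E2.
  + by move=> E; case: (mixed_false V1 H1 V2 H2 E).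
  + by move=> E; case: (mixed_false V2 H2 V1 H1 (esym E)).
  + have V1' := validC V1 H1; have V2' := validC V2 H2.
    rewrite !psiC //.
    case E1: (psi c Br A) => [L1 D1]; case E2: (psi c Br2 A2) => [L2 D2] /= [EL ED].
    case: (psi_ok V1' E1) => SL1 AL1 _ _ [_ Inv1]; case/andP: (Inv1 b (vpath V1)) => _ HL1.
    case: (psi_ok V2' E2) => SL2 AL2 _ _ [_ Inv2]; case/andP: (Inv2 b2 (vpath V2)) => _ HL2.
    have Eb : b = b2 by have := congr1 (cge c.+1) EL; rewrite !step_cge.
    subst b2.
    have ED2 : drop b L1 = drop b L2.
      by have := congr1 (drop b) EL; rewrite !drop_size_cat ?size_nseq.
    have EL2 : L1 = L2 by apply: (L_eq_aux SL1 SL2 AL1 AL2 HL1 HL2 ED2).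
    have [-> ->] : Br = Br2 /\ A = A2 by apply: (IH _ _ _ _ V1' V2'); rewrite E1 E2 EL2 ED.
    by [].
Qed.

Lemma cge_nseq k x : cge k (nseq x k) = x.
Proof. by elim: x => //= x; rewrite /cge /= leqnn => ->. Qed.

Lemma decomp_top k L : sorted geq L -> all (fun y => y <= k) L ->
  L = nseq (cge k L) k ++ drop (cge k L) L /\ all (fun y => y < k) (drop (cge k L) L).
Proof.
move=> SL AL; have Ht := take_top SL AL (leqnn _).
split; first by rewrite -{1}(cat_take_drop (cge k L) L) Ht.
have := congr1 (cge k) (cat_take_drop (cge k L) L).
rewrite cge_cat Ht cge_nseq => H0.
have : cge k (drop (cge k L) L) == 0 by apply/eqP; lia.
rewrite /cge -leqn0 leqNgt -has_count => /hasPn H.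
by apply/allP=> y /H; rewrite -ltnNge.
Qed.

Lemma head_ne c A : all (fun a => a <= c) A -> (head 0 A == c.+1) = false.
Proof. by case: A => //= a A /andP [H _]; apply/negbTE; rewrite neq_ltn ltnS H. Qed.

Lemma psi_surj_aux N : forall c L D, c + size L + size D <= N ->
  sorted geq L -> all (fun x => 0 < x <= c) L -> sorted leq D ->
  exists Br A, [/\ validB c Br A, psi c Br A = (L, D) &
     forall z, ((0 < c) ==> (z <= cge c L)) -> all (leq z) D -> path leq z Br].
Proof.
elim: N => [|N IH] [|c] L D HN SL AL SD.
- exists D, (nseq (size D) 0); split.
  + rewrite /validB SD size_nseq eqxx andbT /=.
    apply/andP; split; last by apply/allP=> a /nseqP [-> _].
    by elim: (size D) => //= n IHn; rewrite path_min_sorted //; apply/allP=> a /nseqP [-> _].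
  + by rewrite psi0 (nil_of_all0 AL).
  + by move=> z _ Hz; rewrite path_min_sorted.
- by [].
- exists D, (nseq (size D) 0); split.
  + rewrite /validB SD size_nseq eqxx andbT /=.
    apply/andP; split; last by apply/allP=> a /nseqP [-> _].
    by elim: (size D) => //= n IHn; rewrite path_min_sorted //; apply/allP=> a /nseqP [-> _].
  + by rewrite psi0 (nil_of_all0 AL).
  + by move=> z _ Hz; rewrite path_min_sorted.
- set x := cge c.+1 L.
  have [EL AR] := decomp_top SL (all_le_of AL).
  rewrite -/x in EL AR.
  have ALR : all (fun y => 0 < y <= c) (drop x L).
    apply/allP=> y Hy; move: (allP AR y Hy); rewrite ltnS => ->.
    by move: (allP (all_drop_pred x AL) y Hy) => /andP [-> _].
  have Cstep : (match D with [::] => true | y :: _ => x <= y end) ->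
      exists Br A, [/\ validB c.+1 Br A, psi c.+1 Br A = (L, D) &
       forall z, ((0 < c.+1) ==> (z <= cge c.+1 L)) -> all (leq z) D -> path leq z Br].
    move=> HxD.
    set L' := (if c is 0 then [::] else nseq x c) ++ drop x L.
    have SL' : sorted geq L'.
      rewrite /L'; case: (c) ALR => [|c'] ALR /=; first exact: drop_sorted.
      by apply: sorted_geq_nseq; [exact: drop_sorted | exact: all_le_of ALR].
    have AL' : all (fun y => 0 < y <= c) L'.
      rewrite /L' all_cat ALR andbT; case: (c) => [|c'] //=.
      by apply/allP=> a; move/nseqP=> [-> _]; rewrite ltn0Sn leqnn.
    have HL' : (0 < c) ==> (x <= cge c L').
      rewrite /L'; case: (c) => [|c'] //=.
      by rewrite cge_cat cge_nseq leq_addr.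
    have HN' : c + size L' + size D <= N.
      have : size L' <= size L.
        have HsL : size L = x + size (drop x L) by rewrite {1}EL size_cat size_nseq.
        rewrite /L' size_cat HsL; case: (c) => [|c'] /=; rewrite ?size_nseq; lia.
      move: HN; lia.
    have [Br' [A' [V' E' I']]] := IH _ _ _ HN' SL' AL' SD.
    have Hp : path leq x Br'.
      apply: I' => //; case: D HxD SD {E' HN' HN} => //= y D' Hxy SD.
      rewrite Hxy /=; apply: sub_all (path_leq_all SD) => z; exact: leq_trans Hxy.
    exists (x :: Br'), A'; split.
    + case/and4P: V' => HB HA Hc /eqP Hs.
      rewrite /validB /= Hp HA (sub_all _ Hc) /=; last by move=> a /leqW.
      by apply/eqP; rewrite Hs.
    + rewrite psiC; last by case/and4P: V' => _ _ Hc _; exact: head_ne.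
      rewrite E' /=; congr pair.
      rewrite {1}EL; congr (_ ++ _); rewrite /L'; case: (c) ALR => [|c2] ALR /=.
        by rewrite (nil_of_all0 ALR).
      by rewrite drop_size_cat ?size_nseq.
    + by move=> z Hz _; rewrite /= Hp andbT.
  case: D HN SD Cstep => [|y D'] HN SD Cstep; first exact: Cstep.
  case: (leqP x y) => Hxy; first exact: Cstep.
  have Hx : 0 < x by apply: leq_ltn_trans Hxy.
  set L'' := nseq x.-1 c.+1 ++ drop x L.
  have EL2 : L = c.+1 :: L'' by rewrite {1}EL /L''; case: (x) Hx.
  have SL'' : sorted geq L'' by move: SL; rewrite EL2 => /path_sorted.
  have AL'' : all (fun y => 0 < y <= c.+1) L'' by move: AL; rewrite EL2 => /andP [].
  have CL'' : cge c.+1 L'' = x.-1.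
    by rewrite /L'' cge_cat cge_nseq (cge_small AR) addn0.
  have HN' : c.+1 + size L'' + size D' <= N.
    by move: HN; rewrite {1}EL2 /=; lia.
  have SD' := path_sorted SD.
  have [Br' [A' [V' E' I']]] := IH _ _ _ HN' SL'' AL'' SD'.
  have Hp : path leq y Br'.
    apply: I'; first by rewrite CL''; move: Hxy Hx; lia.
    exact: path_leq_all SD.
  exists (y :: Br'), (c.+1 :: A'); split.
  + case/and4P: V' => HB HA Hc /eqP Hs.
    rewrite /validB /= Hp leqnn Hc path_min_sorted // HA /=.
    by apply/eqP; rewrite Hs; lia.
  + by rewrite psiD E' EL2.
  + by move=> z Hz /andP [Hzy _]; rewrite /= Hzy Hp.
Qed.

Lemma psi_surj c L D : sorted geq L -> all (fun x => 0 < x <= c) L -> sorted leq D ->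
  exists Br A, validB c Br A /\ psi c Br A = (L, D).
Proof.
move=> SL AL SD; have [Br [A [V E _]]] := @psi_surj_aux (c + size L + size D) c L D (leqnn _) SL AL SD.
by exists Br, A.
Qed.

Definition Pj j l := has (fun i => (hook1 l i == i) && (nth 0 l i.-1 == j)) (iota 1 (size l)).
Definition Qj j (l : seq nat) := count_mem j l == j.

Definition build j (p : seq nat * seq nat) :=
  map (addn j.+1) (rev p.2) ++ nseq j j ++ p.1.

Definition recon j Br A := map (addn j) (rev Br) ++ j :: map succn A.

Definition Fj j l :=
  let t := size l in let d := (t - j)./2 in let i := t - d in
  build j (psi j.-1 (rev (map (subn^~ j) (take i.-1 l))) (map predn (drop i l))).

Lemma sorted_split (s1 s2 : seq nat) x : sorted geq (s1 ++ x :: s2) ->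
  all (fun y => x <= y) s1 /\ all (fun y => y <= x) s2.
Proof.
elim: s1 => [|a s1 IH] /=; first by move/(order_path_min geq_trans).
move=> H; have [H1 H2] := IH (path_sorted H); split => //.
rewrite H1 andbT.
by have := order_path_min geq_trans H; rewrite all_cat /= => /and3P [_ ->].
Qed.

Lemma split_ge k s : sorted geq s ->
  all (fun y => k <= y) (take (cge k s) s) /\ all (fun y => y < k) (drop (cge k s) s).
Proof.
elim: s => [|y s IH] //= H; rewrite /cge /=.
case: (leqP k y) => Hky /=.
  by rewrite Hky /= add0n; exact: IH (path_sorted H).
have Hs : all (fun z => z < k) s.
  apply/allP=> z Hz; apply: leq_ltn_trans Hky.
  by move: (allP (order_path_min geq_trans H) z Hz).
by rewrite -/(cge k s) (cge_small Hs) /= Hky Hs.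
Qed.

Lemma map_subK j s : map (subn^~ j) (map (addn j) s) = s.
Proof. by elim: s => //= x s ->; rewrite addKn. Qed.

Lemma map_predK s : map predn (map succn s) = s.
Proof. by elim: s => //= x s ->. Qed.

Lemma Fj_recon j Br A : 0 < j -> validB j.-1 Br A ->
  Fj j (recon j Br A) = build j (psi j.-1 Br A).
Proof.
move=> Hj /and4P [_ _ _ /eqP Hs].
rewrite /Fj.
have Hsz : size (recon j Br A) = j + (size A + size A).
  rewrite /recon size_cat /= size_map size_rev size_map Hs; lia.
rewrite Hsz addKn addnn half_double.
have -> : (j + (size A).*2 - size A).-1 = size (map (addn j) (rev Br)).
  rewrite size_map size_rev Hs; lia.
have -> : j + (size A).*2 - size A = (size (map (addn j) (rev Br))).+1.
  rewrite size_map size_rev Hs; lia.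
rewrite /recon take_size_cat // map_subK revK.
by rewrite -cat_rcons drop_size_cat ?size_rcons // map_predK.
Qed.

Lemma map_addsub j s : all (fun y => j <= y) s -> map (addn j) (map (subn^~ j) s) = s.
Proof. by elim: s => //= x s IH /andP [Hx /IH ->]; rewrite subnKC. Qed.

Lemma map_succpred s : all (fun y => 0 < y) s -> map succn (map predn s) = s.
Proof. by elim: s => //= x s IH /andP [Hx /IH ->]; rewrite prednK. Qed.

Lemma sorted_map_geq f s : {homo f : x y / x <= y} -> sorted geq s -> sorted geq (map f s).
Proof.
move=> Hf Hs; rewrite sorted_map; apply: sub_sorted Hs => x y /=; exact: Hf.
Qed.

Lemma LHS_decomp j l : sorted geq l -> all (fun x => 0 < x) l -> Pj j l ->
  exists Br A, [/\ 0 < j, validB j.-1 Br A & l = recon j Br A].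
Proof.
move=> SL PL /hasP [i]; rewrite mem_iota => /andP [Hi1 Hi2] /andP [/eqP Hh /eqP Hn].
rewrite /hook1 Hn in Hh.
have Hk : i.-1 < size l by move: Hi1 Hi2; lia.
have El : l = take i.-1 l ++ j :: drop i l.
  have Hd : drop i.-1 l = nth 0 l i.-1 :: drop i l by rewrite (drop_nth 0 Hk) prednK.
  by rewrite -Hn -Hd cat_take_drop.
have [A1 A2] : all (fun y => j <= y) (take i.-1 l) /\ all (fun y => y <= j) (drop i l) by apply: sorted_split; rewrite -El.
have Hj : 0 < j by rewrite -Hn; apply: (allP PL); apply: mem_nth.
exists (rev (map (subn^~ j) (take i.-1 l))), (map predn (drop i l)); split => //.
  rewrite /validB rev_sorted size_rev !size_map size_take Hk size_drop.
  apply/and4P; split.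
  - by apply: sorted_map_geq; [move=> x y; exact: leq_sub2r | exact: take_sorted].
  - by apply: sorted_map_geq; [move=> x y; rewrite -!subn1; exact: leq_sub2r | exact: drop_sorted].
  - by rewrite all_map; apply: sub_all A2 => y /= Hy; lia.
  - by apply/eqP; move: Hh Hi1 Hi2 Hj; lia.
rewrite /recon revK map_addsub // map_succpred; first by [].
by apply: all_drop_pred.
Qed.

Lemma sorted_join (s1 s2 : seq nat) x : sorted geq s1 -> all (fun y => x <= y) s1 ->
  sorted geq s2 -> all (fun y => y <= x) s2 -> sorted geq (s1 ++ x :: s2).
Proof.
move=> S1 A1 S2 A2; elim: s1 S1 A1 => [|a s1 IH] /= S1 A1.
  by rewrite path_min_sorted.
case/andP: A1 => Hxa A1; rewrite path_min_sorted; first exact: IH (path_sorted S1) A1.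
rewrite all_cat /= Hxa (order_path_min geq_trans S1) /=.
by apply: sub_all A2 => y Hy; apply: leq_trans Hy Hxa.
Qed.

Lemma sumn_map_add j s : sumn (map (addn j) s) = j * size s + sumn s.
Proof. by elim: s => [|x s IH] /=; [rewrite muln0 | rewrite IH mulnS; lia]. Qed.

Lemma sumn_map_succ s : sumn (map succn s) = size s + sumn s.
Proof. by elim: s => //= x s ->; lia. Qed.

Lemma sumn_rev s : sumn (rev s) = sumn s.
Proof. by rewrite !sumnE big_rev. Qed.

Lemma recon_part j Br A : 0 < j -> validB j.-1 Br A ->
  sorted geq (recon j Br A) && all (fun x => 0 < x) (recon j Br A).
Proof.
move=> Hj /and4P [SB SA CA _]; apply/andP; split.
  apply: sorted_join.
  - apply: sorted_map_geq; first by move=> x y; rewrite leq_add2l.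
    by rewrite -rev_sorted revK.
  - by rewrite all_map; apply/allP=> x _ /=; rewrite leq_addr.
  - by apply: sorted_map_geq.
  - by rewrite all_map; apply: sub_all CA => x /= Hx; move: Hj Hx; lia.
rewrite all_cat /= Hj all_map /=; apply/andP; split.
  by apply/allP=> x _ /=; lia.
by rewrite all_map; apply/allP=> x _.
Qed.

Lemma recon_P j Br A : 0 < j -> validB j.-1 Br A -> Pj j (recon j Br A).
Proof.
move=> Hj /and4P [_ _ _ /eqP Hs]; apply/hasP; exists (size Br).+1.
  rewrite mem_iota /recon size_cat /= size_map size_rev; lia.
rewrite /hook1 /recon /= nth_cat size_map size_rev ltnn subnn /=.
rewrite eqxx andbT size_cat /= size_map size_rev size_map; apply/eqP; move: Hs Hj; lia.
Qed.

Lemma build_part j L D : 0 < j -> sorted geq L -> all (fun x => 0 < x <= j.-1) L ->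
  sorted leq D ->
  [&& sorted geq (build j (L, D)), all (fun x => 0 < x) (build j (L, D)) & Qj j (build j (L, D))].
Proof.
move=> Hj SL AL SD; apply/and3P; split.
- rewrite /build /=; case: j Hj AL => [|j] // _ AL /=.
  apply: sorted_join.
  + apply: sorted_map_geq; first by move=> x y; rewrite leq_add2l.
    by rewrite -rev_sorted revK.
  + by rewrite all_map; apply/allP=> x _ /=; lia.
  + by apply: sorted_geq_nseq => //; apply: sub_all AL => x /andP [_ /leqW].
  + rewrite all_cat; apply/andP; split; first by apply/allP=> x /nseqP [-> _].
    by apply: sub_all AL => x /andP [_ /leqW].
- rewrite /build /= !all_cat all_map; apply/and3P; split.
  + by apply/allP=> x _ /=.
  + by apply/allP=> x /nseqP [-> _].
  + by apply: sub_all AL => x /andP [].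
  rewrite /Qj /build /= !count_cat count_nseq (_ : pred1 j j = true) ?mul1n; last exact: eqxx.
  have -> : count_mem j (map (addn j.+1) (rev D)) = 0.
    by apply/eqP; rewrite -leqn0 leqNgt -has_count; apply/hasP=> [[x /mapP [y _ ->]]] /=; lia.
  have -> : count_mem j L = 0.
    apply/eqP; rewrite -leqn0 leqNgt -has_count; apply/hasP=> [[x Hx]] /= /eqP Ex.
    by move: (allP AL x Hx); rewrite Ex; move: Hj; lia.
  by rewrite add0n addn0.
Qed.

Lemma sum_eq j Br A L D : 0 < j -> validB j.-1 Br A -> psi j.-1 Br A = (L, D) ->
  sumn (recon j Br A) = sumn (build j (L, D)).
Proof.
move=> Hj V E; have [_ _ _ SzD [Sum _]] := psi_ok V E.
case/and4P: V => _ _ _ /eqP Hs.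
rewrite /recon /build /= !sumn_cat /= sumn_map_add sumn_map_succ sumn_map_add.
rewrite sumn_nseq !size_rev !sumn_rev SzD Hs.
case: j Hj Hs {E} => [|j] // _ Hs /=; nia.
Qed.

Lemma cge_map_add k s : cge k (map (addn k) s) = size s.
Proof. by elim: s => //= x s; rewrite /cge /= leq_addr add1n => ->. Qed.

Lemma build_inj j L D L2 D2 : all (fun x => x < j) L -> all (fun x => x < j) L2 ->
  build j (L, D) = build j (L2, D2) -> L = L2 /\ D = D2.
Proof.
move=> A1 A2 E.
have Hc : forall L D, all (fun x => x < j) L -> cge j.+1 (build j (L, D)) = size D.
  move=> L' D' A'; rewrite /build /= !cge_cat cge_map_add size_rev.
  rewrite (cge_small (k:=j.+1) (L:=nseq j j)); last by apply/allP=> x /nseqP [-> _].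
  rewrite (cge_small (k:=j.+1) (L:=L')) ?addn0 //.
  by apply: sub_all A' => x /leqW.
have Hs : size D = size D2 by rewrite -(Hc L D A1) -(Hc L2 D2 A2) E.
have := congr1 (take (size D)) E; have := congr1 (drop (size D)) E.
rewrite /build /=.
have Hd1 : size (map (addn j.+1) (rev D)) = size D by rewrite size_map size_rev.
have Hd2 : size (map (addn j.+1) (rev D2)) = size D by rewrite size_map size_rev Hs.
rewrite (drop_size_cat _ Hd1) (drop_size_cat _ Hd2) (take_size_cat _ Hd1) (take_size_cat _ Hd2).
move=> /(congr1 (drop j)); rewrite !drop_size_cat ?size_nseq // => ->.
by move/(inj_map (@addnI j.+1)) => Er; split => //; rewrite -(revK D) Er revK.
Qed.

Lemma RHS_decomp j m : 0 < j -> sorted geq m -> all (fun x => 0 < x) m -> Qj j m ->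
  exists L D, [/\ sorted geq L, all (fun x => 0 < x <= j.-1) L, sorted leq D &
                  m = build j (L, D)].
Proof.
move=> Hj SM PM /eqP QM.
set d := cge j.+1 m.
have [AT AR] := split_ge j.+1 SM; rewrite -/d in AT AR.
set T := take d m in AT *; set R := drop d m in AR *.
have SR : sorted geq R by apply: drop_sorted.
have CT : count_mem j T = 0.
  apply/eqP; rewrite -leqn0 leqNgt -has_count; apply/hasP=> [[x Hx]] /= /eqP Ex.
  by move: (allP AT x Hx); rewrite Ex ltnn.
have CR : cge j R = j.
  rewrite -{2}QM -(cat_take_drop d m) count_cat -/T -/R CT add0n.
  apply: eq_in_count => x Hx /=; move: (allP AR x Hx); rewrite ltnS eqn_leq => ->.
  by [].
have [AT2 AR2] := split_ge j SR; rewrite CR in AT2 AR2.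
have Hjs : j <= size R by rewrite -{1}CR /cge count_size.
have ET : take j R = nseq j j.
  have : all (pred1 j) (take j R).
    apply/allP=> x Hx; move: (allP AT2 x Hx) (allP AR x (mem_take Hx)).
    by rewrite /= ltnS eqn_leq => -> ->.
  by move/all_pred1P ->; rewrite size_take_min (minn_idPl Hjs).
exists (drop j R), (rev (map (subn^~ j.+1) T)); split.
- exact: drop_sorted.
- apply/allP=> x Hx; move: (allP AR2 x Hx) => Hxj.
  have : 0 < x by apply: (allP PM); apply: mem_drop (mem_drop Hx).
  by move: Hxj Hj; lia.
- rewrite rev_sorted; apply: sorted_map_geq; first by move=> x y; exact: leq_sub2r.
  exact: take_sorted.
- rewrite /build /= revK map_addsub // -ET cat_take_drop.
  by rewrite cat_take_drop.
Qed.

Lemma count_PQ j n ps : 0 < j -> uniq ps -> (forall l, (l \in ps) = is_partition n l) ->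
  count (Pj j) ps = count (Qj j) ps.
Proof.
move=> Hj Up Hps.
have DEC : forall l, is_partition n l -> Pj j l -> exists Br A L D,
    [/\ validB j.-1 Br A, l = recon j Br A, psi j.-1 Br A = (L, D) & Fj j l = build j (L, D)].
  move=> l /and3P [SL PL _] HP.
  have [Br [A [_ V El]]] := LHS_decomp SL PL HP.
  case E: (psi j.-1 Br A) => [L D].
  by exists Br, A, L, D; split => //; rewrite El Fj_recon // E.
have FS : forall l, is_partition n l -> Pj j l -> is_partition n (Fj j l) /\ Qj j (Fj j l).
  move=> l Hl HP; have [Br [A [L [D [V El E FE]]]]] := DEC l Hl HP.
  have [SL' AL' SD _ _] := psi_ok V E.
  case/and3P: (build_part Hj SL' AL' SD) => S1 P1 Q1.
  case/and3P: Hl => _ _ /eqP SN.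
  by rewrite FE /is_partition S1 P1 Q1 -(sum_eq Hj V E) -El SN eqxx.
have Finj : {in filter (Pj j) ps &, injective (Fj j)}.
  move=> l1 l2; rewrite !mem_filter !Hps => /andP [P1 H1] /andP [P2 H2] EF.
  have [Br1 [A1 [L1 [D1 [V1 El1 E1 FE1]]]]] := DEC l1 H1 P1.
  have [Br2 [A2 [L2 [D2 [V2 El2 E2 FE2]]]]] := DEC l2 H2 P2.
  have [_ AL1 _ _ _] := psi_ok V1 E1; have [_ AL2 _ _ _] := psi_ok V2 E2.
  have Hlt : forall L, all (fun x => 0 < x <= j.-1) L -> all (fun x => x < j) L.
    by move=> L AL; apply: sub_all AL => x /andP [_]; move: Hj; lia.
  have [EL ED] := build_inj (Hlt _ AL1) (Hlt _ AL2) (etrans (esym FE1) (etrans EF FE2)).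
  have [EB EA] := psi_inj V1 V2 (etrans E1 (etrans (congr2 pair EL ED) (esym E2))).
  by rewrite El1 El2 EB EA.
have Fsurj : {subset filter (Qj j) ps <= map (Fj j) (filter (Pj j) ps)}.
  move=> m; rewrite mem_filter Hps => /andP [QM /and3P [SM PM /eqP SN]].
  have [L [D [SL AL SD Em]]] := RHS_decomp Hj SM PM QM.
  have [Br [A [V E]]] := psi_surj SL AL SD.
  apply/mapP; exists (recon j Br A); last by rewrite Fj_recon // E.
  rewrite mem_filter Hps recon_P // /is_partition.
  case/andP: (recon_part Hj V) => -> -> /=.
  by rewrite (sum_eq Hj V E) -Em SN.
rewrite -!size_filter; apply/eqP; rewrite eqn_leq; apply/andP; split.
  rewrite -(size_map (Fj j)); apply: uniq_leq_size.
    by rewrite (map_inj_in_uniq Finj) filter_uniq.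
  move=> x /mapP [l Hl ->]; move: Hl; rewrite !mem_filter !Hps => /andP [HP Hl].
  by have [-> ->] := FS l Hl HP.
rewrite -(size_map (Fj j) (filter (Pj j) ps)); apply: uniq_leq_size Fsurj.
exact: filter_uniq.
Qed.

Lemma hook_unique_le l i i' : sorted geq l -> 0 < i -> i <= i' -> i' <= size l ->
  hook1 l i = i -> hook1 l i' = i' -> i = i'.
Proof.
move=> SL Hi Hii' Hi' Hh Hh'.
have Hn : nth 0 l i'.-1 <= nth 0 l i.-1.
  apply: (sorted_leq_nth geq_trans (fun x => leqnn x) 0 SL); rewrite ?inE; lia.
move: Hh Hh'; rewrite /hook1; lia.
Qed.

Lemma hook_unique l i i' : sorted geq l -> 0 < i <= size l -> 0 < i' <= size l ->
  hook1 l i = i -> hook1 l i' = i' -> i = i'.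
Proof.
move=> SL /andP [H1 H2] /andP [H1' H2'] Hh Hh'.
case: (leqP i i') => H; first exact: (hook_unique_le SL H1 H H2' Hh Hh').
by apply/esym; exact: (hook_unique_le SL H1' (ltnW H) H2 Hh' Hh).
Qed.

Lemma elem_le_sumn x s : x \in s -> x <= sumn s.
Proof.
elim: s => //= y s IH; rewrite inE => /orP [/eqP ->|/IH]; first exact: leq_addr.
by move=> H; apply: leq_trans H (leq_addl _ _).
Qed.

Lemma fixed_count n l : is_partition n l ->
  (has_fixed_hook l : nat) = count (fun j => Pj j l) (iota 1 n).
Proof.
move=> /and3P [SL PL /eqP SN].
case: (boolP (has_fixed_hook l)) => H.
- case/hasP: H => i Hi /eqP Hh; move: Hi; rewrite mem_iota => Hi.
  set v := nth 0 l i.-1.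
  have EP : forall j, Pj j l = (j == v).
    move=> j; apply/hasP/eqP.
    + case=> i' Hi' /andP [/eqP Hh' /eqP Hn']; move: Hi'; rewrite mem_iota => Hi'.
      have Ei : i' = i by apply: (hook_unique SL) => //; apply/andP; lia.
      by rewrite -Hn' Ei.
    + by move=> ->; exists i; [rewrite mem_iota | rewrite Hh !eqxx].
  rewrite (eq_count EP) (count_uniq_mem v (iota_uniq 1 n)) mem_iota.
  have Hi2 : i.-1 < size l by case: (i) Hi => //= k; rewrite add1n ltnS.
  have Hv : v \in l by rewrite /v; apply: mem_nth.
  have Hv1 : 0 < v by apply: (allP PL).
  have Hv2 : v <= n by rewrite -SN; apply: elem_le_sumn.
  by rewrite Hv1 /= add1n ltnS Hv2.
- apply/esym/eqP; rewrite -leqn0 leqNgt -has_count; apply/hasP => [[j _ /hasP [i Hi /andP [Hh _]]]].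
  by move/negP: H; apply; apply/hasP; exists i.
Qed.

Lemma count_big (T : Type) (a : pred T) (s : seq T) : count a s = \sum_(x <- s) (a x : nat).
Proof. by elim: s => [|x s IH]; rewrite ?big_nil ?big_cons //= IH. Qed.

Theorem theorem2p1 (n : nat) (ps : seq (seq nat)) :
  1 <= n ->
  uniq ps ->
  (forall l, (l \in ps) = is_partition n l) ->
  count has_fixed_hook ps = sumn (map mult_eq_count ps).
Proof.
move=> Hn Up Hps.
have -> : count has_fixed_hook ps = \sum_(j <- iota 1 n) count (Pj j) ps.
  rewrite count_big.
  rewrite (eq_big_seq (fun l => \sum_(j <- iota 1 n) (Pj j l : nat))); last first.
    by move=> l; rewrite Hps => Hl; rewrite (fixed_count Hl) count_big.
  rewrite exchange_big /=; apply: eq_bigr => j _; by rewrite count_big.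
have -> : sumn (map mult_eq_count ps) = \sum_(j <- iota 1 n) count (Qj j) ps.
  rewrite sumnE big_map.
  rewrite (eq_big_seq (fun l => \sum_(j <- iota 1 n) (Qj j l : nat))); last first.
    move=> l; rewrite Hps => /and3P [_ _ /eqP SN].
    by rewrite /mult_eq_count SN count_big.
  rewrite exchange_big /=; apply: eq_bigr => j _; by rewrite count_big.
apply: eq_big_seq => j; rewrite mem_iota => /andP [Hj _].
exact: count_PQ.
Qed.
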